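(* The class of data languages accepted by SAFA is closed under concatenation: for any SAFA $M_1,M_2$ over $\Sigma\times D$, there is a SAFA $M$ with $L(M)=\{uv: u\in L(M_1),\ v\in L(M_2)\}$.
   Context: $D$ is a fixed countably infinite set of data values; for a finite alphabet $\Sigma$, data words are elements of $(\Sigma\times D)^*$. A set augmented finite automaton (SAFA) is a tuple $M=(Q,\Sigma\times D,q_0,F,H,\delta)$: $Q$ finite set of states, $q_0\in Q$ initial, $F\subseteq Q$ final, $H=\{h_1,\dots,h_m\}$ a finite collection of (names of) sets of data values, $\delta\subseteq Q\times\Sigma\times C\times OP\times Q$ with $C=\{p(h_i),\,!p(h_i): h_i\in H\}$, $OP=\{-\}\cup\{\mathsf{ins}(h_i):h_i\in H\}$. Configurations are $(q,\langle S_1,\dots,S_m\rangle)$ with $S_i\subseteq D$ finite; initially state $q_0$ and all sets empty. On reading $(a,d)$, a transition $(q,a,\alpha,op,q')$ from the current state may be taken if $\alpha=p(h_i)$ and $d\in S_i$, or $\alpha=\,!p(h_i)$ and $d\notin S_i$; then the state becomes $q'$ and if $op=\mathsf{ins}(h_j)$ the value $d$ is added to $S_j$ ($op=-$ changes nothing). A word is accepted if some run reads it entirely and ends in $F$; $L(M)$ is the set of accepted words. *)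

(* Defs.v *)
From mathcomp Require Import all_boot.
Set Implicit Arguments. Unset Strict Implicit. Unset Printing Implicit Defensive.

(* The fixed countably infinite set of data values D is taken to be nat. *)
Definition D := nat.

(* The sets H = {h_0,...,h_(m-1)} are indexed by 'I_m.
   A condition (b, i) stands for p(h_i) if b = true and !p(h_i) if b = false.
   An operation None stands for "-", Some j for ins(h_j). *)
Record SAFA (Sigma : finType) := Safa {
  st : finType;
  nsets : nat;
  q0 : st;
  final : {set st};
  delta : {set st * Sigma * (bool * 'I_nsets) * option 'I_nsets * st}
}.

Definition sets_of (Sigma : finType) (M : SAFA Sigma) := 'I_(nsets M) -> seq D.

Definition cond_holds (Sigma : finType) (M : SAFA Sigma) (S : sets_of M)
    (c : bool * 'I_(nsets M)) (d : D) : bool :=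
  if c.1 then d \in S c.2 else d \notin S c.2.

Definition apply_op (Sigma : finType) (M : SAFA Sigma) (S : sets_of M)
    (op : option 'I_(nsets M)) (d : D) : sets_of M :=
  match op with
  | None => S
  | Some j => fun i => if i == j then d :: S i else S i
  end.

Fixpoint accepts_from (Sigma : finType) (M : SAFA Sigma) (q : st M) (S : sets_of M)
    (w : seq (Sigma * D)) : Prop :=
  match w with
  | [::] => q \in final M
  | (a, d) :: w' =>
      exists (c : bool * 'I_(nsets M)) (op : option 'I_(nsets M)) (q' : st M),
        (q, a, c, op, q') \in delta M /\ cond_holds S c d /\
        @accepts_from Sigma M q' (apply_op S op d) w'
  end.

Definition lang (Sigma : finType) (M : SAFA Sigma) (w : seq (Sigma * D)) : Prop :=
  @accepts_from Sigma M (q0 M) (fun _ => [::]) w.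

(* Main.v *)
Require Import Defs.
From mathcomp Require Import all_boot.
From Stdlib Require Import FunctionalExtensionality.

Set Implicit Arguments. Unset Strict Implicit.

Definition cst (Sigma : finType) (M1 M2 : SAFA Sigma) : finType := (st M1 + st M2)%type.
Definition cn (Sigma : finType) (M1 M2 : SAFA Sigma) := (nsets M1 + nsets M2)%N.
Definition ctr (Sigma : finType) (M1 M2 : SAFA Sigma) : finType :=
  (cst M1 M2 * Sigma * (bool * 'I_(cn M1 M2)) * option 'I_(cn M1 M2) * cst M1 M2)%type.

Definition lift1 (Sigma : finType) (M1 M2 : SAFA Sigma)
  (t : st M1 * Sigma * (bool * 'I_(nsets M1)) * option 'I_(nsets M1) * st M1) : ctr M1 M2 :=
  match t with (q, a, (b, i), op, q') =>
    (inl q, a, (b, lshift (nsets M2) i), omap (lshift (nsets M2)) op, inl q') end.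

Definition lift2 (Sigma : finType) (M1 M2 : SAFA Sigma)
  (t : st M2 * Sigma * (bool * 'I_(nsets M2)) * option 'I_(nsets M2) * st M2) : ctr M1 M2 :=
  match t with (q, a, (b, i), op, q') =>
    (inr q, a, (b, rshift (nsets M1) i), omap (@rshift (nsets M1) (nsets M2)) op, inr q') end.

Definition liftsw (Sigma : finType) (M1 M2 : SAFA Sigma) (q1 : st M1)
  (t : st M2 * Sigma * (bool * 'I_(nsets M2)) * option 'I_(nsets M2) * st M2) : ctr M1 M2 :=
  match t with (q, a, (b, i), op, q') =>
    (inl q1, a, (b, rshift (nsets M1) i), omap (@rshift (nsets M1) (nsets M2)) op, inr q') end.

Definition src2 (Sigma : finType) (M2 : SAFA Sigma)
  (t : st M2 * Sigma * (bool * 'I_(nsets M2)) * option 'I_(nsets M2) * st M2) : st M2 :=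
  match t with (q, _, _, _, _) => q end.

Definition cdelta (Sigma : finType) (M1 M2 : SAFA Sigma) : {set ctr M1 M2} :=
  [set t | [exists t1 in delta M1, t == lift1 M2 t1]
        || [exists t2 in delta M2, t == lift2 M1 t2]
        || [exists q in final M1, exists t2 in delta M2,
              (src2 t2 == q0 M2) && (t == @liftsw _ M1 M2 q t2)]].

Definition cfinal (Sigma : finType) (M1 M2 : SAFA Sigma) : {set cst M1 M2} :=
  [set x : cst M1 M2 | match x with inl q => (q \in final M1) && (q0 M2 \in final M2)
                                 | inr q => q \in final M2 end].

Definition cM (Sigma : finType) (M1 M2 : SAFA Sigma) : SAFA Sigma :=
  @Safa Sigma (cst M1 M2) (cn M1 M2) (inl (q0 M1)) (cfinal M1 M2) (cdelta M1 M2).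

Section Proofs.
Context (Sigma : finType) (M1 M2 : SAFA Sigma).
Let M := cM M1 M2.
Let n1 := nsets M1.
Let n2 := nsets M2.

Definition Sl (S : sets_of M) : sets_of M1 := fun i => S (lshift n2 i).
Definition Sr (S : sets_of M) : sets_of M2 := fun j => S (rshift n1 j).

Lemma ap_l1 (S : sets_of M) op d :
  Sl (@apply_op _ M S (omap (lshift n2) op) d) = apply_op (Sl S) op d.
Proof. by case: op. Qed.

Lemma ap_l2 (S : sets_of M) op d :
  Sr (@apply_op _ M S (omap (lshift n2) op) d) = Sr S.
Proof. case: op => [j|] //; apply: functional_extensionality => i /=.
by rewrite /Sr eq_rlshift. Qed.

Lemma ap_r2 (S : sets_of M) op d :
  Sr (@apply_op _ M S (omap (@rshift n1 n2) op) d) = apply_op (Sr S) op d.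
Proof. case: op => [j|] //; apply: functional_extensionality => i /=.
by rewrite /Sr eq_rshift. Qed.

Lemma memM (t : ctr M1 M2) : (t \in delta M) =
   [|| [exists t1 in delta M1, t == lift1 M2 t1],
       [exists t2 in delta M2, t == lift2 M1 t2] |
       [exists q in final M1, exists t2 in delta M2,
              (src2 t2 == q0 M2) && (t == @liftsw _ M1 M2 q t2)]].
Proof. by rewrite /= /cdelta inE orbA. Qed.

Lemma accR (q : st M2) (S : sets_of M) w :
  @accepts_from _ M (inr q) S w <-> @accepts_from _ M2 q (Sr S) w.
Proof.
elim: w q S => [|[a d] w IH] q S /=.
  by rewrite /cfinal inE.
split.
- move=> [c [op [x [Hd [Hc Hw]]]]].
  move: Hd; rewrite memM => /or3P [/existsP [t1 /andP [_ /eqP E]]|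
     /existsP [t2 /andP [H2 /eqP E]]|
     /existsP [q1 /andP [_ /existsP [t2 /andP [_ /andP [_ /eqP E]]]]]].
  + by move: E; case: t1 => [[[[? ?] [? ?]] ?] ?].
  + move: E H2; case: t2 => [[[[q2 a2] [b i]] op2] q2'] /= [Eq Ea Ec Eop Ex] H2; subst.
    exists (b, i), op2, q2'; split => //; split => //.
    by rewrite -ap_r2; apply/IH.
  + by move: E; case: t2 => [[[[? ?] [? ?]] ?] ?].
- move=> [[b i] [op [q' [Hd [Hc Hw]]]]].
  exists (b, rshift n1 i), (omap (@rshift n1 n2) op), (inr q'); split.
    rewrite memM; apply/or3P; apply: Or32; apply/existsP; exists (q, a, (b, i), op, q').
    by rewrite Hd eqxx.
  split => //. by apply/IH; rewrite ap_r2.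
Qed.
Lemma accL (q : st M1) (S : sets_of M) w :
  @accepts_from _ M (inl q) S w <->
  exists u v, w = u ++ v /\ @accepts_from _ M1 q (Sl S) u /\
              @accepts_from _ M2 (q0 M2) (Sr S) v.
Proof.
elim: w q S => [|[a d] w IH] q S /=.
  rewrite /cfinal inE; split.
    by move=> /andP [H1 H2]; exists [::], [::].
  by move=> [[|? ?] [[|? ?] [//= _ [-> ->]]]].
split.
- move=> [c [op [x [Hd [Hc Hw]]]]].
  move: Hd; rewrite memM => /or3P [/existsP [t1 /andP [H1 /eqP E]]|
     /existsP [t2 /andP [H2 /eqP E]]|
     /existsP [q1 /andP [Hq1 /existsP [t2 /andP [H2 /andP [Hs /eqP E]]]]]].
  + move: E H1; case: t1 => [[[[q2 a2] [b i]] op2] q2'] /= [Eq Ea Ec Eop Ex] H1; subst.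
    move: Hw => /IH [u [v [-> [Hu Hv]]]].
    exists ((a2, d) :: u), v; split => //; split.
      exists (b, i), op2, q2'; split => //; split => //.
      by rewrite -ap_l1.
    by rewrite -(ap_l2 S op2 d).
  + by move: E H2; case: t2 => [[[[? ?] [? ?]] ?] ?].
  + move: E H2 Hs; case: t2 => [[[[q2 a2] [b i]] op2] q2'] /= [Eq Ea Ec Eop Ex] H2 /eqP Hs; subst.
    exists [::], ((a2, d) :: w); split => //; split => //.
    exists (b, i), op2, q2'; split => //; split => //.
    by rewrite -ap_r2; apply/accR.
- move=> [[|[a1 d1] u] [v [Ew [Hu Hv]]]].
  + move: Ew Hu Hv => /= <- Hq /= [[b i] [op [q' [Hd [Hc Hw]]]]].
    exists (b, rshift n1 i), (omap (@rshift n1 n2) op), (inr q'); split.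
      rewrite memM; apply/or3P; apply: Or33; apply/existsP; exists q.
      rewrite Hq /=; apply/existsP; exists (q0 M2, a, (b, i), op, q').
      by rewrite Hd !eqxx.
    split => //. by apply/accR; rewrite ap_r2.
  + move: Ew Hu => /= [Ea Ed Ew] [[b i] [op [q' [Hd [Hc Hw]]]]]; subst.
    exists (b, lshift n2 i), (omap (lshift n2) op), (inl q'); split.
      rewrite memM; apply/or3P; apply: Or31; apply/existsP; exists (q, a1, (b, i), op, q').
      by rewrite Hd eqxx.
    split => //. apply/IH; exists u, v; split => //; split.
      by rewrite ap_l1.
    by rewrite ap_l2.
Qed.
End Proofs.

Theorem theorem6 (Sigma : finType) (M1 M2 : SAFA Sigma) :
  exists M : SAFA Sigma, forall w : seq (Sigma * D),
    lang M w <-> exists u v, w = u ++ v /\ lang M1 u /\ lang M2 v.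
Proof.
exists (cM M1 M2) => w.
exact: (@accL Sigma M1 M2 (q0 M1) (fun _ => [::]) w).
Qed.
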